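(* In the setting of the context, let the opponent use an arbitrary policy $\pi^2\in\Pi^{\mathrm{HR}}$, let $K_T=\max\{k: t_k\le T\}$ be the number of episodes of PSRL-ZSG up to time $T$, and set $t_{K_T+1}=T+1$. Then $$\mathbb{E}\left[TJ(\theta_* )-\sum_{k=1}^{K_T}\sum_{t=t_k}^{t_{k+1}-1}J(\theta_k)\right]\le \mathbb{E}[K_T].$$
   Context: Two-player zero-sum stochastic game: finite state space $\mathcal{S}$, finite joint action space $\mathcal{A}=\mathcal{A}^1\times\mathcal{A}^2$, known reward $r:\mathcal{S}\times\mathcal{A}^1\times\mathcal{A}^2\to[-1,0]$, unknown transition kernel $\theta_*$ drawn from a prior $\mu_1$ supported in $\Omega_*$. At each time $t$, the agent (maximizer) and opponent (minimizer) observe $s_t$, choose $a_t=(a_t^1,a_t^2)$ simultaneously, the agent gets $r(s_t,a_t)$ and $s_{t+1}\sim\theta_*(\cdot\mid s_t,a_t)$. History $h_t=(s_1,a_1,\dots,s_t)$; $\Pi^{\mathrm{HR}}$ is the class of history-dependent randomized policies, $\Pi^{\mathrm{SR}}$ the stationary randomized ones. For a matrix $G$, $\mathrm{val}(G)=\max_p\min_q p^\top Gq$. Finite Diameter: $\max_{s,s'}\max_{\pi^2\in\Pi^{\mathrm{SR}}}\min_{\pi^1\in\Pi^{\mathrm{SR}}}T^{(\pi^1,\pi^2)}_{s\to s'}\le D<\infty$ (expected hitting time). For such $\theta$, there exist a unique $J(\theta)\in[-1,0]$ and $v(\cdot,\theta)$ (unique up to constants) with $J(\theta)+v(s,\theta)=\mathrm{val}\{r(s,\cdot,\cdot)+\sum_{s'}\theta(s'\mid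 s,\cdot,\cdot)v(s',\theta)\}$ for all $s$. $\Omega_*$ is the set of kernels satisfying Finite Diameter with $\max_s v(s,\theta)-\min_s v(s,\theta)\le H$ for a known $H$; $v$ is normalized with $0\le v\le H$. PSRL-ZSG: posterior $\mu_{t+1}(d\theta)\propto\theta(s_{t+1}\mid s_t,a_t)\mu_t(d\theta)$; $N_t(s,a)$ = number of visits to $(s,a)$ before time $t$. Episodes $k=1,2,\dots$ start at $t_1=1<t_2<\cdots$, $T_k=t_{k+1}-t_k$, $T_0=1$. At $t_k$ sample $\theta_k\sim\mu_{t_k}$ and compute the agent's maximin stationary policy $\pi_k^1$ (agent's component of a Nash equilibrium of the Bellman equation above for $\theta_k$); play $a_t^1\sim\pi_k^1(\cdot\mid s_t)$ during the episode. Episode $k$ continues while $t\le t_k+T_{k-1}$ and $N_t(s,a)\le 2N_{t_k}(s,a)$ for all $(s,a)$. Expectations are over the prior, the algorithm's randomness, the opponent's randomness and transitions. *)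

(* Defs.v *)
From HB Require Import structures.
From mathcomp Require Import all_boot all_order all_algebra.
From mathcomp Require Import all_classical all_reals all_analysis.
Set Implicit Arguments. Unset Strict Implicit. Unset Printing Implicit Defensive.
Import Order.TTheory GRing.Theory Num.Theory.
Import numFieldNormedType.Exports.
Local Open Scope classical_set_scope.
Local Open Scope ring_scope.

Section Game.
Context {R : realType} {S A1 A2 : finType}.

Definition is_dist (X : finType) (p : X -> R) : Prop :=
  (forall x, 0 <= p x) /\ \sum_x p x = 1.

Definition tkernel := S -> A1 -> A2 -> S -> R.

Definition is_kernel (th : tkernel) : Prop :=
  forall s a1 a2, is_dist (th s a1 a2).

Definition stat_pol1 (p : S -> A1 -> R) : Prop := forall s, is_dist (p s).
Definition stat_pol2 (q : S -> A2 -> R) : Prop := forall s, is_dist (q s).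

Definition payoff (G : A1 -> A2 -> R) (p : A1 -> R) (q : A2 -> R) : R :=
  \sum_a1 \sum_a2 p a1 * G a1 a2 * q a2.

Definition val (G : A1 -> A2 -> R) : R :=
  sup [set inf [set payoff G p q | q in [set q | is_dist q]]
      | p in [set p | is_dist p]].

Definition is_maximin (G : A1 -> A2 -> R) (p : A1 -> R) : Prop :=
  is_dist p /\ inf [set payoff G p q | q in [set q | is_dist q]] = val G.

Definition bgame (r : S -> A1 -> A2 -> R) (th : tkernel) (v : S -> R) (s : S)
  : A1 -> A2 -> R :=
  fun a1 a2 => r s a1 a2 + \sum_s' th s a1 a2 s' * v s'.

Definition bellman (r : S -> A1 -> A2 -> R) (th : tkernel) (J : R) (v : S -> R)
  : Prop :=
  forall s, J + v s = val (bgame r th v s).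

(* the optimal average value J(theta) (unique solution when it exists) *)
Definition Jopt (r : S -> A1 -> A2 -> R) (th : tkernel) : R :=
  xget 0 [set J | exists v, bellman r th J v].

(* probability of not having hit s' within the first n steps, from s,
   for the Markov chain induced by stationary policies p, q *)
Fixpoint nothit (th : tkernel) (p : S -> A1 -> R) (q : S -> A2 -> R)
  (s' : S) (n : nat) (s : S) : R :=
  match n with
  | 0 => (s != s')%:R
  | n.+1 => (s != s')%:R *
      \sum_s'' (\sum_a1 \sum_a2 p s a1 * q s a2 * th s a1 a2 s'')
               * nothit th p q s' n s''
  end.

(* expected hitting time T^{(p,q)}_{s -> s'} = sum_{n>=0} P(tau > n) *)
Definition hitting_time (th : tkernel) (p : S -> A1 -> R) (q : S -> A2 -> R)
  (s s' : S) : \bar R :=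
  (\sum_(0 <= n <oo) (nothit th p q s' n s)%:E)%E.

Definition finite_diameter (th : tkernel) (D : R) : Prop :=
  forall s s',
   (ereal_sup [set ereal_inf [set hitting_time th p q s s' | p in stat_pol1]
                 | q in stat_pol2] <= D%:E)%E.

Definition Omega (r : S -> A1 -> A2 -> R) (D H : R) (th : tkernel) : Prop :=
  is_kernel th /\ finite_diameter th D /\
  exists J v, bellman r th J v /\
    forall s s', v s - v s' <= H.
End Game.

Section PSRL.
Context {R : realType} {d : measure_display} {Theta : measurableType d}
  {S A1 A2 : finType}.
Variables (mu1 : probability Theta R)
  (P : Theta -> @tkernel R S A1 A2)
  (pol : Theta -> S -> A1 -> R)              (* maximin stationary policy of theta *)
  (pi2 : seq (S * (A1 * A2)) -> S -> A2 -> R). (* opponent's HR policy *)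

(* A history h_t = (s_1,a_1,...,s_{t-1},a_{t-1},s_t) is represented by the
   chronological list h = [:: (s_1,a_1); ...; (s_{t-1},a_{t-1})] and s = s_t;
   thus t = size h + 1. *)

(* likelihood prod_{tau < t} theta(s_{tau+1} | s_tau, a_tau) *)
Fixpoint lik (th : Theta) (h : seq (S * (A1 * A2))) (s : S) : R :=
  match h with
  | [::] => 1
  | (x, a) :: h' => P th x a.1 a.2 (head s (map fst h')) * lik th h' s
  end.

Definition post_exp (h : seq (S * (A1 * A2))) (s : S) (F : Theta -> R) : R :=
  (\int[mu1]_(th in setT) (lik th h s * F th)) /
  (\int[mu1]_(th in setT) lik th h s).

(* Expected accumulated per-step quantity g(theta_*, theta_k(t), [a new
   episode starts at t]) over the next n steps, starting at history (h, s),
   with current episode start t_k = tk, previous episode length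
   T_{k-1} = Tp, current sample theta_k = thk, and true parameter ths.
   N_t(s,a) = count_mem (s,a) h, N_{t_k}(s,a) = count_mem (s,a) (take (tk-1) h). *)
Fixpoint psrl_val (g : Theta -> Theta -> bool -> R) (n : nat) (ths : Theta)
  (h : seq (S * (A1 * A2))) (s : S) (tk Tp : nat) (thk : Theta) : R :=
  match n with
  | 0 => 0
  | n'.+1 =>
    let t := (size h).+1 in
    let newep := (tk + Tp < t)%N ||
      [exists x : S * (A1 * A2), (2 * count_mem x (take tk.-1 h) < count_mem x h)%N] in
    let cont (th : Theta) (tk' Tp' : nat) :=
      g ths th newep +
      \sum_a1 \sum_a2 \sum_s' pol th s a1 * pi2 h s a2 * P ths s a1 a2 s' *
         psrl_val g n' ths (rcons h (s, (a1, a2))) s' tk' Tp' th in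
    if newep then post_exp h s (fun th => cont th t (t - tk)%N)
    else cont thk tk Tp
  end.

(* E[ sum_{t=1}^T g(theta_*, theta_{k(t)}, [t = t_k for some k]) ],
   theta_* ~ mu_1, s_1 = s1.  Initial tk = 0, Tp = 0 force a new episode at
   t = 1 with t_1 = 1 and T_0 = 1 - 0 = 1; the initial thk is irrelevant. *)
Definition psrl_exp (g : Theta -> Theta -> bool -> R) (T : nat) (s1 : S) : R :=
  \int[mu1]_(ths in setT) psrl_val g T ths [::] s1 0 0 ths.

End PSRL.

(* Main.v *)
Require Import Defs.
From HB Require Import structures.
From mathcomp Require Import all_boot all_order all_algebra.
From mathcomp Require Import all_classical all_reals all_analysis.
From mathcomp Require Import measurable_realfun.
From mathcomp Require Import ring lra.
Set Implicit Arguments. Unset Strict Implicit. Unset Printing Implicit Defensive.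
Import Order.TTheory GRing.Theory Num.Theory.
Import numFieldNormedType.Exports.
Local Open Scope classical_set_scope.
Local Open Scope ring_scope.

Section Gen.
Context {R : realType} {d : measure_display} {T : measurableType d}.
Variable mu : probability T R.

Lemma bnd_bounded {U : Type} (f : U -> R) (M : R) : (forall x, `|f x| <= M) -> [bounded f x | x in setT].
Proof.
move=> fM; exists M; split; first by rewrite num_real.
move=> N HN x _ /=; exact: (le_trans (fM x) (ltW HN)).
Qed.

Lemma bm_int (f : T -> R) (M : R) : measurable_fun setT f -> (forall x, `|f x| <= M) ->
  mu.-integrable setT (EFin \o f).
Proof.
move=> mf fM; apply: measurable_bounded_integrable => //.
  apply: (@le_lt_trans _ _ 1%E); last exact: ltry. by rewrite -(probability_setT mu).
exact: bnd_bounded fM.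
Qed.

Lemma prod_int (F : T * T -> R) (M : R) : measurable_fun setT F -> (forall x, `|F x| <= M) ->
  (mu \x mu)%E.-integrable setT (EFin \o F).
Proof.
move=> mf fM; apply: measurable_bounded_integrable => //.
  apply: (@le_lt_trans _ _ 1%E); last exact: ltry.
  have E : (mu \x mu)%E (setT `*` setT) = 1%E.
    rewrite product_measure1E //.
    transitivity (1 * 1 : \bar R)%E; last exact: mule1.
    by congr (_ * _)%E; exact: probability_setT.
  rewrite -setXTT -E; exact: lexx.
exact: bnd_bounded fM.
Qed.


Lemma sec_int (F : T * T -> R) (M : R) x : measurable_fun setT F -> (forall z, `|F z| <= M) ->
  mu.-integrable setT (EFin \o (fun y => F (x, y))).
Proof. by move=> mF FM; apply: (bm_int (M := M)) => //; exact: measurable_fun_pair2. Qed.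

Lemma sec_int2 (F : T * T -> R) (M : R) y : measurable_fun setT F -> (forall z, `|F z| <= M) ->
  mu.-integrable setT (EFin \o (fun x => F (x, y))).
Proof. by move=> mF FM; apply: (bm_int (M := M)) => //; exact: measurable_fun_pair1. Qed.

Lemma RFubini (F : T * T -> R) (M : R) : measurable_fun setT F -> (forall z, `|F z| <= M) ->
  \int[mu]_x (\int[mu]_y F (x, y)) = \int[mu]_y (\int[mu]_x F (x, y)).
Proof.
move=> mF FM; rewrite /Rintegral; congr fine.
transitivity (\int[mu]_x \int[mu]_y (EFin \o F) (x, y))%E.
  apply: eq_integral => x _; rewrite fineK //; exact: integrable_fin_num (sec_int x mF FM).
transitivity (\int[mu]_y \int[mu]_x (EFin \o F) (x, y))%E.
  exact: (Fubini (prod_int mF FM)).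
apply: eq_integral => y _; rewrite fineK //; exact: integrable_fin_num (sec_int2 y mF FM).
Qed.

Lemma meas_partial (F : T * T -> R) (M : R) : measurable_fun setT F -> (forall z, `|F z| <= M) ->
  measurable_fun setT (fun x => \int[mu]_y F (x, y)).
Proof.
move=> mF FM; rewrite /Rintegral.
exact: (measurableT_comp (fine_measurable measurableT) (measurable_fubini_F (prod_int mF FM))).
Qed.

End Gen.
Section GameB.
Context {R : realType} {S A1 A2 : finType}.

Lemma dist_avg_le (X : finType) (p : X -> R) (f : X -> R) c :
  is_dist p -> (forall x, f x <= c) -> \sum_x p x * f x <= c.
Proof.
move=> [p0 p1] fc; apply: (le_trans (y := \sum_x p x * c)).
  by apply: ler_sum => x _; apply: ler_wpM2l.
by rewrite -big_distrl /= p1 mul1r.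
Qed.

Lemma dist_avg_ge (X : finType) (p : X -> R) (f : X -> R) c :
  is_dist p -> (forall x, c <= f x) -> c <= \sum_x p x * f x.
Proof.
move=> [p0 p1] fc; apply: (le_trans (y := \sum_x p x * c)).
  by rewrite -big_distrl /= p1 mul1r.
by apply: ler_sum => x _; apply: ler_wpM2l.
Qed.

Lemma payoff_le (G : A1 -> A2 -> R) p q c : is_dist p -> is_dist q ->
  (forall a1 a2, G a1 a2 <= c) -> payoff G p q <= c.
Proof.
move=> dp dq Gc; rewrite /payoff.
rewrite (eq_bigr (fun a1 => p a1 * \sum_a2 q a2 * G a1 a2)); last first.
  by move=> a1 _; rewrite mulr_sumr; apply: eq_bigr => a2 _; rewrite mulrA mulrAC.
by apply: dist_avg_le => // a1; apply: dist_avg_le.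
Qed.

Lemma payoff_ge (G : A1 -> A2 -> R) p q c : is_dist p -> is_dist q ->
  (forall a1 a2, c <= G a1 a2) -> c <= payoff G p q.
Proof.
move=> dp dq Gc; rewrite /payoff.
rewrite (eq_bigr (fun a1 => p a1 * \sum_a2 q a2 * G a1 a2)); last first.
  by move=> a1 _; rewrite mulr_sumr; apply: eq_bigr => a2 _; rewrite mulrA mulrAC.
by apply: dist_avg_ge => // a1; apply: dist_avg_ge.
Qed.

Definition Gbnd (G : A1 -> A2 -> R) := \sum_a1 \sum_a2 `|G a1 a2|.

Lemma Gbnd_ge (G : A1 -> A2 -> R) a1 a2 : `|G a1 a2| <= Gbnd G.
Proof.
rewrite /Gbnd (bigD1 a1) //= (bigD1 a2) //= -addrA lerDl.
by rewrite addr_ge0 // sumr_ge0 // => i _; rewrite sumr_ge0.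
Qed.

Lemma val_le (G : A1 -> A2 -> R) c : (exists p : A1 -> R, is_dist p) ->
  (exists q : A2 -> R, is_dist q) -> (forall a1 a2, G a1 a2 <= c) -> Defs.val G <= c.
Proof.
move=> [p0 dp0] [q0 dq0] Gc; rewrite /Defs.val; apply: ge_sup.
  by exists (inf [set payoff G p0 q | q in [set q | is_dist q]]), p0.
move=> _ [p dp <-].
apply: (le_trans (y := payoff G p q0)); last exact: payoff_le.
apply: ge_inf; last by exists q0.
exists (- Gbnd G) => _ [q dq <-]; apply: payoff_ge => // a1 a2.
by rewrite lerNl; apply: le_trans (Gbnd_ge G a1 a2); rewrite -normrN ler_norm.
Qed.

Lemma val_ge (G : A1 -> A2 -> R) c : (exists p : A1 -> R, is_dist p) ->
  (exists q : A2 -> R, is_dist q) -> (forall a1 a2, c <= G a1 a2) -> c <= Defs.val G.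
Proof.
move=> [p0 dp0] [q0 dq0] Gc; rewrite /Defs.val.
apply: (le_trans (y := inf [set payoff G p0 q | q in [set q | is_dist q]])).
  apply: lb_le_inf; first by exists (payoff G p0 q0), q0.
  by move=> _ [q dq <-]; apply: payoff_ge.
apply: ub_le_sup; last by exists p0.
exists (Gbnd G) => _ [p dp <-].
apply: (le_trans (y := payoff G p q0)).
  apply: ge_inf; last by exists q0.
  exists (- Gbnd G) => _ [q dq <-]; apply: payoff_ge => // a1 a2.
  by rewrite lerNl; apply: le_trans (Gbnd_ge G a1 a2); rewrite -normrN ler_norm.
by apply: payoff_le => // a1 a2; apply: le_trans (Gbnd_ge G a1 a2); rewrite ler_norm.
Qed.

Lemma Jopt_bnd (r : S -> A1 -> A2 -> R) (th : tkernel) (s0 : S) :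
  (forall s a1 a2, -1 <= r s a1 a2 <= 0) -> is_kernel th ->
  (exists p : A1 -> R, is_dist p) -> (exists q : A2 -> R, is_dist q) ->
  -1 <= Jopt r th <= 0.
Proof.
move=> hr hk ep eq; rewrite /Jopt; case: xgetP => [J _ [v Hb] | _]; last first.
  by rewrite lerN10 lexx.
have [smax _ Hmax] := @arg_maxP _ R S s0 xpredT v isT.
have [smin _ Hmin] := @arg_minP _ R S s0 xpredT v isT.
apply/andP; split.
  rewrite -(lerD2r (v smin)) (Hb smin); apply: val_ge => // a1 a2.
  rewrite /bgame lerD //; first by case/andP: (hr smin a1 a2).
  by apply: dist_avg_ge => // s'; apply: Hmin.
rewrite -(lerD2r (v smax)) (Hb smax) add0r; apply: val_le => // a1 a2.
rewrite /bgame -[v smax]add0r lerD //; first by case/andP: (hr smax a1 a2).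
by apply: dist_avg_le => // s'; apply: Hmax.
Qed.
End GameB.
Section BM.
Context {R : realType} {d' : measure_display} {T : measurableType d'}.

Definition bm (f : T -> R) := measurable_fun setT f /\ exists M : R, forall x, `|f x| <= M.

Lemma bm_cst c : bm (fun _ => c).
Proof. by split; [exact: measurable_cst | exists `|c|]. Qed.

Lemma bm_add f g : bm f -> bm g -> bm (fun x => f x + g x).
Proof.
move=> [mf [M fM]] [mg [N gN]]; split; first exact: measurable_funD.
by exists (M + N) => x; rewrite (le_trans (ler_normD _ _)) // lerD.
Qed.

Lemma bm_opp f : bm f -> bm (fun x => - f x).
Proof.
move=> [mf [M fM]]; split; first exact: measurableT_comp.
by exists M => x; rewrite normrN.
Qed.

Lemma bm_sub f g : bm f -> bm g -> bm (fun x => f x - g x).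
Proof. by move=> bf bg; apply: bm_add => //; exact: bm_opp. Qed.

Lemma bm_mul f g : bm f -> bm g -> bm (fun x => f x * g x).
Proof.
move=> [mf [M fM]] [mg [N gN]]; split; first exact: measurable_funM.
exists (M * N) => x; rewrite normrM ler_pM //.
Qed.

Lemma bm_sum (I : Type) (r : seq I) (F : I -> T -> R) :
  (forall i, bm (F i)) -> bm (fun x => \sum_(i <- r) F i x).
Proof.
move=> bF; elim: r => [|i r IH].
  rewrite (_ : (fun _ => _) = fun _ => 0); first exact: bm_cst.
  by apply/funext => x; rewrite big_nil.
rewrite (_ : (fun _ => _) = fun x => F i x + \sum_(j <- r) F j x); last first.
  by apply/funext => x; rewrite big_cons.
exact: bm_add.
Qed.

End BM.

Lemma bm_comp {R : realType} {d1 d2 : measure_display} {T1 : measurableType d1}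
  {T2 : measurableType d2} (f : T2 -> R) (g : T1 -> T2) :
  bm f -> measurable_fun setT g -> bm (fun x => f (g x)).
Proof.
move=> [mf [M fM]] mg; split; first exact: (measurableT_comp mf mg).
by exists M.
Qed.

Section Main.
Context {R : realType} {d : measure_display} {Theta : measurableType d} {S A1 A2 : finType}.
Variables (mu1 : probability Theta R) (P : Theta -> @tkernel R S A1 A2)
  (pol : Theta -> S -> A1 -> R) (pi2 : seq (S * (A1 * A2)) -> S -> A2 -> R).
Hypothesis hk : forall th, is_kernel (P th).
Hypothesis mP : forall s a1 a2 s', measurable_fun setT (fun th => P th s a1 a2 s').
Hypothesis dpol : forall th s, is_dist (pol th s).
Hypothesis mpol : forall s a1, measurable_fun setT (fun th => pol th s a1).
Hypothesis dpi2 : forall h s, is_dist (pi2 h s).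

Lemma dist_ge0 (X : finType) (p : X -> R) x : is_dist p -> 0 <= p x.
Proof. by case. Qed.

Lemma dist_le1 (X : finType) (p : X -> R) x : is_dist p -> p x <= 1.
Proof.
move=> [p0 p1]; rewrite -p1 (bigD1 x) //= lerDl sumr_ge0 //.
Qed.

Lemma lik_bnd th h s : 0 <= lik P th h s <= 1.
Proof.
elim: h => [|[x a] h IH] /=; first by rewrite ler01 lexx.
case/andP: IH => l0 l1; apply/andP; split.
  by rewrite mulr_ge0 // dist_ge0 //; exact: hk.
rewrite mulr_ile1 // ?dist_ge0 ?dist_le1 //; exact: hk.
Qed.

Lemma lik_bm h s : bm (fun th => lik P th h s).
Proof.
elim: h => [|[x a] h IH] /=; first exact: bm_cst.
apply: bm_mul => //; split; first exact: mP.
exists 1 => th; rewrite ger0_norm; [apply: dist_le1 | apply: dist_ge0]; exact: hk.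
Qed.

Lemma lik_rcons th h s a1 a2 s' :
  lik P th (rcons h (s, (a1, a2))) s' = lik P th h s * P th s a1 a2 s'.
Proof.
elim: h s => [|[x b] h IH] s /=; first by rewrite mulr1 mul1r.
rewrite IH mulrA; by case: h {IH}.
Qed.


Definition E h s (f : Theta -> R) := \int[mu1]_x (lik P x h s * f x).
Definition Z h s := \int[mu1]_x (lik P x h s).

Lemma bm_integrable (f : Theta -> R) : bm f -> mu1.-integrable setT (EFin \o f).
Proof. by case=> mf [M fM]; exact: (bm_int mu1 mf fM). Qed.

Lemma E_int h s f : bm f -> mu1.-integrable setT (EFin \o (fun x => lik P x h s * f x)).
Proof. by move=> bf; apply: bm_integrable; apply: bm_mul => //; exact: lik_bm. Qed.

Lemma E_add h s f g : bm f -> bm g -> E h s (fun x => f x + g x) = E h s f + E h s g.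
Proof.
move=> bf bg; rewrite /E -RintegralD //; try exact: E_int.
by apply: eq_Rintegral => x _; rewrite mulrDr.
Qed.

Lemma E_sub h s f g : bm f -> bm g -> E h s (fun x => f x - g x) = E h s f - E h s g.
Proof.
move=> bf bg; rewrite /E -RintegralB //; try exact: E_int.
by apply: eq_Rintegral => x _; rewrite mulrBr.
Qed.

Lemma E_scal h s f c : bm f -> E h s (fun x => c * f x) = c * E h s f.
Proof.
move=> bf; rewrite /E -RintegralZl //; last exact: E_int.
by apply: eq_Rintegral => x _; rewrite mulrCA.
Qed.

Lemma E_le h s f g : bm f -> bm g -> (forall x, f x <= g x) -> E h s f <= E h s g.
Proof.
move=> bf bg fg; rewrite /E; apply: le_Rintegral => //; try exact: E_int.
move=> x _; apply: ler_wpM2l => //; by case/andP: (lik_bnd x h s).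
Qed.

Lemma E_ge0 h s f : (forall x, 0 <= f x) -> 0 <= E h s f.
Proof.
move=> f0; rewrite /E; apply: Rintegral_ge0 => x _; apply: mulr_ge0 => //.
by case/andP: (lik_bnd x h s).
Qed.

Lemma E_cst h s c : E h s (fun _ => c) = c * Z h s.
Proof.
rewrite /E /Z -RintegralZl //; last exact: (bm_integrable (lik_bm h s)).
by apply: eq_Rintegral => x _; rewrite mulrC.
Qed.

Lemma Z_ge0 h s : 0 <= Z h s.
Proof. by rewrite /Z; apply: Rintegral_ge0 => x _; case/andP: (lik_bnd x h s). Qed.

Lemma E_sum h s (I : Type) (r : seq I) (F : I -> Theta -> R) : (forall i, bm (F i)) ->
  E h s (fun x => \sum_(i <- r) F i x) = \sum_(i <- r) E h s (F i).
Proof.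
move=> bF; elim: r => [|i r IH].
  rewrite big_nil (_ : (fun _ => _) = fun _ => 0); last by apply/funext => x; rewrite big_nil.
  by rewrite E_cst mul0r.
rewrite big_cons -IH -E_add //; last exact: bm_sum.
by congr E; apply/funext => x; rewrite big_cons.
Qed.

Lemma E_rcons h s a1 a2 s' f :
  E (rcons h (s, (a1, a2))) s' f = E h s (fun x => P x s a1 a2 s' * f x).
Proof. by rewrite /E; apply: eq_Rintegral => x _; rewrite lik_rcons mulrA. Qed.


Lemma bmP s a1 a2 s' : bm (fun x => P x s a1 a2 s').
Proof.
split; first exact: mP.
exists 1 => th; rewrite ger0_norm; [apply: dist_le1 | apply: dist_ge0]; exact: hk.
Qed.

Lemma bmpol s a1 : bm (fun th => pol th s a1).
Proof.
split; first exact: mpol.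
exists 1 => th; rewrite ger0_norm; [apply: dist_le1 | apply: dist_ge0]; exact: dpol.
Qed.

Lemma bm_abs {d' : measure_display} {T : measurableType d'} (f : T -> R) :
  bm f -> bm (fun x => `|f x|).
Proof.
move=> [mf [M fM]]; split; first exact: measurableT_comp.
by exists M => x; rewrite normr_id.
Qed.

Lemma E_bnd h s f (M : R) : bm f -> (forall x, `|f x| <= M) -> `|E h s f| <= M.
Proof.
move=> bf fM; rewrite /E; apply: (le_trans (le_normr_Rintegral _ _)) => //; first exact: E_int.
apply: (le_trans (y := \int[mu1]_x M)).
  apply: le_Rintegral => //.
  - exact: bm_integrable (bm_abs (bm_mul (lik_bm h s) bf)).
  - exact: (bm_integrable (bm_cst M)).
  - move=> x _; rewrite normrM; apply: (le_trans _ (fM x)).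
    by rewrite ger0_norm; [apply: ler_piMl | ]; case/andP: (lik_bnd x h s).
rewrite Rintegral_cst // (_ : fine _ = 1) ?mulr1 //.
exact: (congr1 fine (probability_setT mu1)).
Qed.

Lemma sec_bm (C : Theta * Theta -> R) y : bm C -> bm (fun th => C (y, th)).
Proof. by move=> bC; apply: bm_comp => //; exact: pair1_measurable. Qed.

Lemma E_partial h s (C : Theta * Theta -> R) : bm C -> bm (fun y => E h s (fun th => C (y, th))).
Proof.
move=> bC; have bF : bm (fun z : Theta * Theta => lik P z.2 h s * C z).
  by apply: bm_mul => //; exact: (bm_comp (lik_bm h s) measurable_snd).
case: (bC) => _ [M CM]; split.
  by case: bF => mF [N FN]; exact: (meas_partial mu1 mF FN).
by exists M => y; apply: E_bnd => //; exact: sec_bm.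
Qed.


Lemma psrl_bm g : (forall b, bm (fun z : Theta * Theta => g z.1 z.2 b)) ->
  forall n h s tk Tp, bm (fun z : Theta * Theta => psrl_val mu1 P pol pi2 g n z.1 h s tk Tp z.2).
Proof.
move=> bg; elim=> [|n IH] h s tk Tp /=; first exact: bm_cst.
case: (_ || _).
  apply: (bm_comp (f := fun y => post_exp mu1 P h s (fun th => g y th true +
        \sum_a1 \sum_a2 \sum_s' pol th s a1 * pi2 h s a2 * P y s a1 a2 s' *
           psrl_val mu1 P pol pi2 g n y (rcons h (s, (a1, a2))) s' (size h).+1 ((size h).+1 - tk) th)));
    last exact: measurable_fst.
  rewrite /post_exp; apply: bm_mul; last exact: bm_cst.
  apply: (E_partial h s (C := fun z : Theta * Theta => g z.1 z.2 true +
        \sum_a1 \sum_a2 \sum_s' pol z.2 s a1 * pi2 h s a2 * P z.1 s a1 a2 s' *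
           psrl_val mu1 P pol pi2 g n z.1 (rcons h (s, (a1, a2))) s' (size h).+1 ((size h).+1 - tk) z.2)).
  apply: bm_add => //; do 3 (apply: bm_sum => ?).
  apply: bm_mul; last exact: IH.
  apply: bm_mul; last exact: (bm_comp (bmP _ _ _ _) measurable_fst).
  by apply: bm_mul; [exact: (bm_comp (bmpol _ _) measurable_snd) | exact: bm_cst].
apply: bm_add => //; do 3 (apply: bm_sum => ?).
apply: bm_mul; last exact: IH.
apply: bm_mul; last exact: (bm_comp (bmP _ _ _ _) measurable_fst).
by apply: bm_mul; [exact: (bm_comp (bmpol _ _) measurable_snd) | exact: bm_cst].
Qed.


Lemma cont_bm g : (forall b, bm (fun z : Theta * Theta => g z.1 z.2 b)) ->
  forall n h s tk Tp b, bm (fun z : Theta * Theta => g z.1 z.2 b +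
        \sum_a1 \sum_a2 \sum_s' pol z.2 s a1 * pi2 h s a2 * P z.1 s a1 a2 s' *
           psrl_val mu1 P pol pi2 g n z.1 (rcons h (s, (a1, a2))) s' tk Tp z.2).
Proof.
move=> bg n h s tk Tp b.
apply: bm_add => //; do 3 (apply: bm_sum => ?).
apply: bm_mul; last exact: psrl_bm.
apply: bm_mul; last exact: (bm_comp (bmP _ _ _ _) measurable_fst).
by apply: bm_mul; [exact: (bm_comp (bmpol _ _) measurable_snd) | exact: bm_cst].
Qed.

Lemma sum3B (F1 F2 : A1 -> A2 -> S -> R) :
  \sum_a1 \sum_a2 \sum_s' F1 a1 a2 s' - \sum_a1 \sum_a2 \sum_s' F2 a1 a2 s' =
  \sum_a1 \sum_a2 \sum_s' (F1 a1 a2 s' - F2 a1 a2 s').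
Proof.
rewrite -sumrB; apply: eq_bigr => a1 _; rewrite -sumrB; apply: eq_bigr => a2 _.
by rewrite -sumrB.
Qed.

Lemma psrl_lin g1 g2 : (forall b, bm (fun z : Theta * Theta => g1 z.1 z.2 b)) ->
  (forall b, bm (fun z : Theta * Theta => g2 z.1 z.2 b)) ->
  forall n ths h s tk Tp thk,
  psrl_val mu1 P pol pi2 g1 n ths h s tk Tp thk - psrl_val mu1 P pol pi2 g2 n ths h s tk Tp thk =
  psrl_val mu1 P pol pi2 (fun a b c => g1 a b c - g2 a b c) n ths h s tk Tp thk.
Proof.
move=> bg1 bg2; elim=> [|n IH] ths h s tk Tp thk /=; first by rewrite subr0.
case: (_ || _).
  rewrite /post_exp -mulrBl; congr (_ * _).
  rewrite -RintegralB //; last first.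
    - exact: (E_int h s (sec_bm ths (cont_bm bg2 n h s (size h).+1 ((size h).+1 - tk) true))).
    - exact: (E_int h s (sec_bm ths (cont_bm bg1 n h s (size h).+1 ((size h).+1 - tk) true))).
  apply: eq_Rintegral => th _; rewrite -mulrBr; congr (_ * _).
  rewrite opprD addrACA; congr (_ + _); rewrite sum3B.
  apply: eq_bigr => a1 _; apply: eq_bigr => a2 _; apply: eq_bigr => s' _.
  by rewrite -IH mulrBr.
rewrite opprD addrACA; congr (_ + _); rewrite sum3B.
apply: eq_bigr => a1 _; apply: eq_bigr => a2 _; apply: eq_bigr => s' _.
by rewrite -IH mulrBr.
Qed.


Lemma bm_swap (C : Theta * Theta -> R) : bm C -> bm (fun z : Theta * Theta => C (z.2, z.1)).
Proof.
move=> bC; apply: (bm_comp (g := fun z : Theta * Theta => (z.2, z.1))) => //.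
exact: measurable_fun_pair.
Qed.

Lemma E_swap h s (C : Theta * Theta -> R) : bm C ->
  E h s (fun x => E h s (fun th => C (x, th))) = E h s (fun th => E h s (fun x => C (x, th))).
Proof.
move=> bC; rewrite /E.
have bF : bm (fun z : Theta * Theta => lik P z.1 h s * (lik P z.2 h s * C z)).
  apply: bm_mul; first exact: (bm_comp (lik_bm h s) measurable_fst).
  by apply: bm_mul => //; exact: (bm_comp (lik_bm h s) measurable_snd).
transitivity (\int[mu1]_x \int[mu1]_th (lik P x h s * (lik P th h s * C (x, th)))).
  apply: eq_Rintegral => x _; rewrite -RintegralZl //.
  exact: (E_int h s (sec_bm x bC)).
case: bF => mF [M FM]; rewrite (RFubini mu1 mF FM).
apply: eq_Rintegral => th _; rewrite -RintegralZl //; last first.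
  exact: (E_int h s (sec_bm th (bm_swap bC))).
by apply: eq_Rintegral => x _; rewrite mulrCA.
Qed.


Lemma E_step h s thp (v : A1 -> A2 -> S -> Theta -> R) : (forall a1 a2 s', bm (v a1 a2 s')) ->
  E h s (fun x => \sum_a1 \sum_a2 \sum_s' pol thp s a1 * pi2 h s a2 * P x s a1 a2 s' * v a1 a2 s' x)
  = \sum_a1 \sum_a2 \sum_s' pol thp s a1 * pi2 h s a2 * E (rcons h (s, (a1, a2))) s' (v a1 a2 s').
Proof.
have bK a1 a2 s' (f : Theta -> R) : bm f ->
    bm (fun x => pol thp s a1 * pi2 h s a2 * P x s a1 a2 s' * f x).
  by move=> bf; apply: bm_mul => //; apply: bm_mul; [exact: bm_cst | exact: bmP].
move=> bv; rewrite E_sum; last by move=> a1; do 2 (apply: bm_sum => ?); exact: bK.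
apply: eq_bigr => a1 _; rewrite E_sum; last by move=> a2; apply: bm_sum => ?; exact: bK.
apply: eq_bigr => a2 _; rewrite E_sum; last by move=> s'; exact: bK.
apply: eq_bigr => s' _; rewrite E_rcons -E_scal; last by apply: bm_mul => //; exact: bmP.
by congr E; apply/funext => x; rewrite mulrA.
Qed.

Lemma pol_sum h s thp x (c : R) :
  \sum_a1 \sum_a2 \sum_s' pol thp s a1 * pi2 h s a2 * P x s a1 a2 s' * c = c.
Proof.
transitivity (\sum_a1 \sum_a2 pol thp s a1 * pi2 h s a2 * c).
  apply: eq_bigr => a1 _; apply: eq_bigr => a2 _.
  by rewrite -big_distrl /= -mulr_sumr (hk x s a1 a2).2 mulr1.
transitivity (\sum_a1 pol thp s a1 * c).
  apply: eq_bigr => a1 _.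
  by rewrite -big_distrl /= -mulr_sumr (dpi2 h s).2 mulr1.
by rewrite -big_distrl /= (dpol thp s).2 mul1r.
Qed.

Section J.
Variable Jf : Theta -> R.
Hypothesis Jb : forall th, -1 <= Jf th <= 0.
Hypothesis mJ : measurable_fun setT Jf.

Lemma bmJ : bm Jf.
Proof.
split => //; exists 1 => th; case/andP: (Jb th) => J1 J0.
by rewrite ler0_norm // lerNl.
Qed.

Lemma E_addc h s f c : bm f -> E h s (fun x => f x + c) = E h s f + c * Z h s.
Proof. by move=> bf; rewrite E_add ?E_cst //; exact: bm_cst. Qed.

Lemma key h s (C : Theta * Theta -> R) (m : R) (U : Theta -> R) : bm C -> bm U ->
  (forall th, E h s (fun x => C (x, th)) <= E h s (fun x => Jf x - Jf th - 1 + m * (- Jf th))) ->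
  (forall x, 0 <= U x) -> (forall x, -1 - m * Jf x <= U x) ->
  E h s (fun x => E h s (fun th => C (x, th)) / Z h s) <= E h s U.
Proof.
move=> bC bU hC U0 hU.
have [Z0|Zn0] := eqVneq (Z h s) 0.
  rewrite Z0 (_ : (fun _ => _) = fun _ => 0); last by apply/funext => x; rewrite invr0 mulr0.
  by rewrite E_cst mul0r; apply: E_ge0.
have bI := E_partial h s bC.
rewrite (_ : (fun x => _) = fun x => (Z h s)^-1 * E h s (fun th => C (x, th))); last first.
  by apply/funext => x; rewrite mulrC.
rewrite E_scal // E_swap //.
have bR : bm (fun th => E h s (fun x => Jf x - Jf th - 1 + m * (- Jf th))).
  apply: (E_partial h s (C := fun z : Theta * Theta => Jf z.2 - Jf z.1 - 1 + m * (- Jf z.1))).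
  apply: bm_add; last by apply: bm_mul; [exact: bm_cst | apply: bm_opp; exact: (bm_comp bmJ measurable_fst)].
  apply: bm_sub; last exact: bm_cst.
  by apply: bm_sub; [exact: (bm_comp bmJ measurable_snd) | exact: (bm_comp bmJ measurable_fst)].
have bL : bm (fun th => E h s (fun x => C (x, th))).
  exact: (E_partial h s (bm_swap bC)).
apply: (le_trans (y := (Z h s)^-1 * E h s (fun th => E h s (fun x => Jf x - Jf th - 1 + m * (- Jf th))))).
  by apply: ler_wpM2l; [rewrite invr_ge0; exact: Z_ge0 | exact: E_le].
have bA : bm (fun th => - Jf th - 1 + m * (- Jf th)).
  apply: bm_add; last by apply: bm_mul; [exact: bm_cst | apply: bm_opp; exact: bmJ].
  by apply: bm_sub; [apply: bm_opp; exact: bmJ | exact: bm_cst].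
rewrite (_ : (fun th => _) = fun th => Z h s * (- Jf th - 1 + m * (- Jf th)) + E h s Jf); last first.
  apply/funext => th; rewrite (_ : (fun x => _) = fun x => Jf x + (- Jf th - 1 + m * (- Jf th))); last first.
    by apply/funext => x; ring.
  by rewrite E_addc; [ring | exact: bmJ].
have Hf : forall a b c : R, c != 0 -> c^-1 * (c * a + b * c) = a + b.
  by move=> a b c c0; field.
rewrite E_addc; last by apply: bm_mul => //; exact: bm_cst.
rewrite E_scal // Hf // -E_add //; last exact: bmJ.
apply: E_le => //; last by move=> x; apply: le_trans (hU x); rewrite le_eqVlt; apply/orP; left; apply/eqP; ring.
by apply: bm_add => //; exact: bmJ.
Qed.


Lemma step_le h s thp (f : Theta -> R) (v : A1 -> A2 -> S -> Theta -> R) (U : Theta -> R) :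
  bm f -> (forall a1 a2 s', bm (v a1 a2 s')) -> bm U ->
  (forall a1 a2 s', E (rcons h (s, (a1, a2))) s' (v a1 a2 s') <= E (rcons h (s, (a1, a2))) s' U) ->
  E h s (fun x => f x + \sum_a1 \sum_a2 \sum_s' pol thp s a1 * pi2 h s a2 * P x s a1 a2 s' * v a1 a2 s' x)
  <= E h s (fun x => f x + U x).
Proof.
have bK a1 a2 s' (g : Theta -> R) : bm g ->
    bm (fun x => pol thp s a1 * pi2 h s a2 * P x s a1 a2 s' * g x).
  by move=> bg; apply: bm_mul => //; apply: bm_mul; [exact: bm_cst | exact: bmP].
move=> bf bv bU hv.
rewrite E_add //; last by do 3 (apply: bm_sum => ?); exact: bK.
rewrite E_add // lerD2l E_step //.
rewrite (_ : U = fun x => \sum_a1 \sum_a2 \sum_s' pol thp s a1 * pi2 h s a2 * P x s a1 a2 s' * U x);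
  last by apply/funext => x; rewrite pol_sum.
rewrite E_step //.
apply: ler_sum => a1 _; apply: ler_sum => a2 _; apply: ler_sum => s' _.
apply: ler_wpM2l => //; apply: mulr_ge0; [exact: dist_ge0 | exact: dist_ge0].
Qed.

Definition gD := fun ths th (b : bool) => Jf ths - Jf th - (b : bool)%:R.

Lemma bgD b : bm (fun z : Theta * Theta => gD z.1 z.2 b).
Proof.
apply: bm_sub; last exact: bm_cst.
by apply: bm_sub; [exact: (bm_comp bmJ measurable_fst) | exact: (bm_comp bmJ measurable_snd)].
Qed.

Definition Vf thk (a b : nat) x := a%:R * (- Jf thk) + b%:R * (- Jf x).

Lemma bmV thk a b : bm (Vf thk a b).
Proof.
apply: bm_add; apply: bm_mul; try exact: bm_cst; apply: bm_opp; exact: bmJ.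
Qed.

Lemma V_ge0 thk a b x : 0 <= Vf thk a b x.
Proof.
rewrite /Vf; case/andP: (Jb thk) => _ J1; case/andP: (Jb x) => _ J2.
by rewrite addr_ge0 // mulr_ge0 // oppr_ge0.
Qed.

Lemma main_claim n : forall h s tk Tp thk, (tk <= size h)%N -> (size h <= tk + Tp)%N ->
  E h s (fun x => psrl_val mu1 P pol pi2 gD n x h s tk Tp thk)
  <= E h s (Vf thk (tk + Tp - size h) (size h - tk)).
Proof.
elim: n => [|n IH] h s tk Tp thk htk hTp.
  rewrite /= E_cst mul0r; apply: E_ge0 => x; exact: V_ge0.
rewrite /=; case Hn: (_ || _).
  pose C := fun z : Theta * Theta => gD z.1 z.2 true +
    \sum_a1 \sum_a2 \sum_s' pol z.2 s a1 * pi2 h s a2 * P z.1 s a1 a2 s' *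
      psrl_val mu1 P pol pi2 gD n z.1 (rcons h (s, (a1, a2))) s' (size h).+1 ((size h).+1 - tk)%N z.2.
  have bC : bm C := cont_bm bgD n h s (size h).+1 ((size h).+1 - tk)%N true.
  apply: (le_trans _ (key (C := C) (m := ((size h).+1 - tk)%N%:R) bC (bmV _ _ _) _ (V_ge0 thk _ _) _)).
  - exact: lexx.
  - move=> th.
    apply: (le_trans (@step_le h s th (fun x => gD x th true)
      (fun a1 a2 s' x => psrl_val mu1 P pol pi2 gD n x (rcons h (s, (a1, a2))) s' (size h).+1 ((size h).+1 - tk)%N th)
      (Vf th ((size h).+1 - tk)%N 0) _ _ _ _)).
    + exact: (bm_comp (bgD true) (pair2_measurable th)).
    + by move=> a1 a2 s'; exact: (bm_comp (psrl_bm bgD n _ _ _ _) (pair2_measurable th)).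
    + exact: bmV.
    + move=> a1 a2 s'; have := IH (rcons h (s, (a1, a2))) s' (size h).+1 ((size h).+1 - tk)%N th.
      by rewrite size_rcons addKn subnn; apply => //; rewrite leq_addr.
    apply: E_le.
    + by apply: bm_add; [exact: (bm_comp (bgD true) (pair2_measurable th)) | exact: bmV].
    + apply: bm_add; last by apply: bm_mul; [exact: bm_cst | exact: bm_cst].
      by apply: bm_sub; [apply: bm_sub; [exact: bmJ | exact: bm_cst] | exact: bm_cst].
    + move=> x; rewrite /gD /Vf /= mul0r addr0.
      by rewrite le_eqVlt; apply/orP; left; apply/eqP; ring.
  - move=> x; rewrite /Vf (_ : ((size h).+1 - tk)%N%:R = (size h - tk)%N%:R + 1 :> R); last first.
      by rewrite subSn // -addn1 natrD.
    have h1 : 0 <= (tk + Tp - size h)%N%:R * (- Jf thk).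
      by case/andP: (Jb thk) => _ J0; rewrite mulr_ge0 // oppr_ge0.
    case/andP: (Jb x) => Jx1 Jx0.
    nra.
move/norP: Hn => [H1 _]; rewrite ltnS -ltnNge in H1.
apply: (le_trans (@step_le h s thk (fun x => gD x thk false)
  (fun a1 a2 s' x => psrl_val mu1 P pol pi2 gD n x (rcons h (s, (a1, a2))) s' tk Tp thk)
  (Vf thk (tk + Tp - (size h).+1)%N ((size h).+1 - tk)%N) _ _ _ _)).
- exact: (bm_comp (bgD false) (pair2_measurable thk)).
- by move=> a1 a2 s'; exact: (bm_comp (psrl_bm bgD n _ _ _ _) (pair2_measurable thk)).
- exact: bmV.
- move=> a1 a2 s'; have := IH (rcons h (s, (a1, a2))) s' tk Tp thk.
  by rewrite size_rcons; apply => //; exact: leqW.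
apply: E_le; [|exact: bmV|].
- by apply: bm_add; [exact: (bm_comp (bgD false) (pair2_measurable thk)) | exact: bmV].
move=> x; rewrite /gD /Vf /= !natrB //; try exact: ltnW; try exact: leqW.
rewrite -[(size h).+1]addn1 !natrD.
by rewrite le_eqVlt; apply/orP; left; apply/eqP; ring.
Qed.


Lemma final_J T s1 (th0 : Theta) :
  \int[mu1]_x psrl_val mu1 P pol pi2 gD T x [::] s1 0 0 x <= 0.
Proof.
have H := main_claim T (h := [::]) (tk := 0%N) (Tp := 0%N) s1 th0 (leqnn 0) (leqnn 0).
have E0 : E [::] s1 (Vf th0 (0 + 0 - size [::]) (size [::] - 0)) = 0.
  rewrite /E /Vf /= (_ : (fun x => _) = fun _ => 0); last first.
    by apply/funext => x; rewrite !mul0r addr0 mulr0.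
  by rewrite Rintegral_cst // mul0r.
rewrite E0 in H; apply: le_trans H; rewrite le_eqVlt; apply/orP; left; apply/eqP.
by rewrite /E; apply: eq_Rintegral => x _; rewrite mul1r; case: T.
Qed.

End J.

End Main.

Theorem lemma1 (R : realType) (d : measure_display) (Theta : measurableType d)
  (S A1 A2 : finType) (r : S -> A1 -> A2 -> R) (D H : R)
  (mu1 : probability Theta R) (P : Theta -> @tkernel R S A1 A2)
  (pol : Theta -> S -> A1 -> R) (pi2 : seq (S * (A1 * A2)) -> S -> A2 -> R)
  (s1 : S) (T : nat) :
  (forall s a1 a2, -1 <= r s a1 a2 <= 0) ->
  (forall th, is_kernel (P th)) ->
  (forall s a1 a2 s', measurable_fun setT (fun th => P th s a1 a2 s')) ->
  measurable_fun setT (fun th => Jopt r (P th)) ->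
  (exists A, measurable A /\ A `<=` [set th | Omega r D H (P th)] /\
             mu1 A = 1%E) ->
  (forall th s, is_dist (pol th s)) ->
  (forall s a1, measurable_fun setT (fun th => pol th s a1)) ->
  (forall th, Omega r D H (P th) ->
     exists v, bellman r (P th) (Jopt r (P th)) v /\
       forall s, is_maximin (bgame r (P th) v s) (pol th s)) ->
  (forall h s, is_dist (pi2 h s)) ->
  psrl_exp mu1 P pol pi2
    (fun ths th _ => Jopt r (P ths) - Jopt r (P th)) T s1
  <= psrl_exp mu1 P pol pi2 (fun _ _ newep => (newep : bool)%:R) T s1.
Proof.
move=> hr hk mP mJ [A [mA [AO muA]]] dpol mpol _ dpi2.
have Jb : forall th, -1 <= Jopt r (P th) <= 0.
  move=> th; apply: (Jopt_bnd s1) => //; [exists (pol th s1) | exists (pi2 [::] s1)]; done.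
have bJ : bm (fun th => Jopt r (P th)).
  split => //; exists 1 => th; case/andP: (Jb th) => J1 J0.
  by rewrite ler0_norm // lerNl.
have [th0 _] : A !=set0.
  apply/set0P/negP => /eqP A0; move: muA; rewrite A0 measure0 => /eqP.
  by move=> /eqP [] /eqP; rewrite eq_sym oner_eq0.
have bg1 : forall b : bool, bm (fun z : Theta * Theta => Jopt r (P z.1) - Jopt r (P z.2)).
  by move=> b; apply: bm_sub; [exact: (bm_comp bJ measurable_fst) | exact: (bm_comp bJ measurable_snd)].
have bg2 : forall b : bool, bm (fun z : Theta * Theta => (b%:R : R)).
  by move=> b; exact: bm_cst.
have mdiag : measurable_fun setT (fun x : Theta => (x, x)) by exact: measurable_fun_pair.
have bint g (bg : forall b, bm (fun z : Theta * Theta => g z.1 z.2 b)) :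
    mu1.-integrable setT (EFin \o (fun x => psrl_val mu1 P pol pi2 g T x [::] s1 0 0 x)).
  have [mf [M fM]] := bm_comp (psrl_bm mu1 pi2 hk mP dpol mpol bg T [::] s1 0 0) mdiag.
  exact: (bm_int mu1 mf fM).
rewrite /psrl_exp -subr_le0 -RintegralB //; [|exact: bint|exact: bint].
rewrite (_ : \int[mu1]_x _ = \int[mu1]_x psrl_val mu1 P pol pi2
   (gD (fun th => Jopt r (P th))) T x [::] s1 0 0 x).
  exact: (final_J mu1 hk mP dpol mpol dpi2 Jb mJ T s1 th0).
by apply: eq_Rintegral => x _; exact: (psrl_lin mu1 pi2 hk mP dpol mpol bg1 bg2).
Qed.
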